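(* Modularity is not local. That is, there exist graphs $G_1=(V_1,E_1)$ and $G_2=(V_2,E_2)$, a set $V_a\subseteq V_1\cap V_2$ such that $G_1$ and $G_2$ agree on $V_a$ and on the neighborhood of $V_a$, clusterings $C_a,D_a$ of $V_a$, a clustering $C_1$ of $V_1\setminus V_a$ and a clustering $C_2$ of $V_2\setminus V_a$, such that $Q_{\mathrm{mod}}(G_1,C_a\cup C_1)\ge Q_{\mathrm{mod}}(G_1,D_a\cup C_1)$ but $Q_{\mathrm{mod}}(G_2,C_a\cup C_2)< Q_{\mathrm{mod}}(G_2,D_a\cup C_2)$.
   Context: A (symmetric weighted) graph is a pair $G=(V,E)$ of a finite set $V$ and a function $E:V\times V\to\mathbb{R}_{\ge 0}$ with $E(i,j)=E(j,i)$; self loops are allowed. A clustering of $G$ is a partition of $V$ into nonempty pairwise disjoint sets (clusters); a clustering of the empty set is the empty collection. For $c\subseteq V$ let $v_c=\sum_{i\in c}\sum_{j\in V}E(i,j)$ (volume) and $w_c=\sum_{i,j\in c}E(i,j)$ (within weight). Modularity: $Q_{\mathrm{mod}}(G,C)=\sum_{c\in C}\left(\frac{w_c}{v_V}-\left(\frac{v_c}{v_V}\right)^2\right)$ (defined when $v_V>0$). Graphs $G_1=(V_1,E_1)$, $G_2=(V_2,E_2)$ agree on $V_a\subseteq V_1\cap V_2$ and its neighborhood if $E_1(i,j)=E_2(i,j)$ for all $i\in V_a$, $j\in V_1\cap V_2$; $E_1(i,j)=0$ for all $i\in V_a$, $j\in V_1\setminus V_2$; and $E_2(i,j)=0$ for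 all $i\in V_a$, $j\in V_2\setminus V_1$. A quality function $Q$ is local if for all such $G_1,G_2,V_a$ and all clusterings $C_a,D_a$ of $V_a$, $C_1$ of $V_1\setminus V_a$, $C_2$ of $V_2\setminus V_a$, $Q(G_1,C_a\cup C_1)\ge Q(G_1,D_a\cup C_1)$ implies $Q(G_2,C_a\cup C_2)\ge Q(G_2,D_a\cup C_2)$. *)

(* Defs.v *)
(* Vertices live in a common finite universe T; a graph is a
   finite vertex set V : {set T} with a weight function E : T -> T -> R
   (only its values on V x V matter). *)
From HB Require Import structures.
From mathcomp Require Import all_boot all_order all_algebra.
From mathcomp Require Import reals.
Set Implicit Arguments. Unset Strict Implicit. Unset Printing Implicit Defensive.
Import Order.TTheory GRing.Theory Num.Theory.
Local Open Scope ring_scope.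

Section Modularity.
Variables (R : realType) (T : finType).

Definition is_graph (V : {set T}) (E : T -> T -> R) : Prop :=
  forall i j, i \in V -> j \in V -> 0 <= E i j /\ E i j = E j i.

Definition volume (V : {set T}) (E : T -> T -> R) (c : {set T}) : R :=
  \sum_(i in c) \sum_(j in V) E i j.

Definition within (E : T -> T -> R) (c : {set T}) : R :=
  \sum_(i in c) \sum_(j in c) E i j.

(* modularity Q_mod(G, C) (meaningful when v_V > 0) *)
Definition Qmod (V : {set T}) (E : T -> T -> R) (C : {set {set T}}) : R :=
  \sum_(c in C) (within E c / volume V E V - (volume V E c / volume V E V) ^+ 2).

Definition clustering (C : {set {set T}}) (A : {set T}) : Prop := partition C A.

Definition agree (V1 : {set T}) (E1 : T -> T -> R) (V2 : {set T}) (E2 : T -> T -> R)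
  (Va : {set T}) : Prop :=
  [/\ Va \subset V1 :&: V2,
      (forall i j, i \in Va -> j \in V1 :&: V2 -> E1 i j = E2 i j),
      (forall i j, i \in Va -> j \in V1 :\: V2 -> E1 i j = 0) &
      (forall i j, i \in Va -> j \in V2 :\: V1 -> E2 i j = 0)].

End Modularity.

(* Main.v *)
Require Import Defs.
From HB Require Import structures.
From mathcomp Require Import all_boot all_order all_algebra.
From mathcomp Require Import reals.
From mathcomp Require Import lra.
Import Order.TTheory GRing.Theory Num.Theory.
Local Open Scope ring_scope.

Definition oa : 'I_3 := @Ordinal 3 0 isT.
Definition ob : 'I_3 := @Ordinal 3 1 isT.
Definition oc : 'I_3 := @Ordinal 3 2 isT.

Definition EE (R : realType) (i j : 'I_3) : R :=
  if i == j then (if val i == 2%N then 10 else 2)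
  else if (val i + val j == 1)%N then 1 else 0.

Lemma part0 (T : finType) : partition (set0 : {set {set T}}) set0.
Proof.
rewrite /partition /cover big_set0 eqxx /= in_set0 andbT.
by apply/trivIsetP => A B; rewrite in_set0.
Qed.


Lemma part1 (T : finType) (B : {set T}) : B != set0 -> partition [set B] B.
Proof.
move=> nB; have := partitionU1 (part0 T) nB.
rewrite !setU0; apply; by rewrite -setI_eq0 setI0.
Qed.

Lemma ne_ab : oa != ob. Proof. by []. Qed.

Lemma sum2 (R : realType) (F : 'I_3 -> R) : \sum_(i in [set oa; ob]) F i = F oa + F ob.
Proof.
have h1 : oa \notin [set ob] by rewrite !inE.
by rewrite (big_setU1 _ h1) big_set1.
Qed.

Lemma sum3 (R : realType) (F : 'I_3 -> R) :
  \sum_(i in [set oa; ob; oc]) F i = F oa + F ob + F oc.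
Proof.
have h1 : oa \notin [set ob; oc] by rewrite !inE.
have h2 : ob \notin [set oc] by rewrite !inE.
by rewrite -setUA (big_setU1 _ h1) (big_setU1 _ h2) big_set1 /= addrA.
Qed.

Theorem theorem2 (R : realType) :
  exists (n : nat) (V1 V2 Va : {set 'I_n}) (E1 E2 : 'I_n -> 'I_n -> R)
         (Ca Da C1 C2 : {set {set 'I_n}}),
    is_graph V1 E1 /\ is_graph V2 E2 /\
    0 < volume V1 E1 V1 /\ 0 < volume V2 E2 V2 /\
    agree V1 E1 V2 E2 Va /\
    clustering Ca Va /\ clustering Da Va /\
    clustering C1 (V1 :\: Va) /\ clustering C2 (V2 :\: Va) /\
    Qmod V1 E1 (Ca :|: C1) >= Qmod V1 E1 (Da :|: C1) /\
    Qmod V2 E2 (Ca :|: C2) < Qmod V2 E2 (Da :|: C2).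
Proof.
pose Va : {set 'I_3} := [set oa; ob].
pose V1 : {set 'I_3} := [set oa; ob; oc].
have hV1a : V1 :\: Va = [set oc].
  apply/setP => i; rewrite !inE.
  by case: i => [[|[|[|k]]] Hk].
have hV2a : Va :\: Va = set0 by rewrite setDv.
have sab : [set oa] != [set ob].
  by apply/eqP => /setP /(_ oa); rewrite !in_set1.
have sac : [set oa] != [set oc].
  by apply/eqP => /setP /(_ oa); rewrite !in_set1.
have sbc : [set ob] != [set oc].
  by apply/eqP => /setP /(_ ob); rewrite !in_set1.
have sVc : Va != [set oc].
  by apply/eqP => /setP /(_ oa); rewrite !inE.
have hgraph : forall V : {set 'I_3}, is_graph V (EE R).
  move=> V i j _ _; rewrite /EE.
  case: i => [[|[|[|k]]] Hk] //; case: j => [[|[|[|l]]] Hl] //=;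
    split => //; try lra; match goal with |- ?g => idtac g end.
have volVa : forall V : {set 'I_3}, V = Va \/ V = V1 ->
   volume V (EE R) [set oa] = 3 /\ volume V (EE R) [set ob] = 3.
  move=> V [->|->]; rewrite /volume !big_set1 /Va /V1 ?sum2 ?sum3 /EE /=; split; lra.
exists 3%N, V1, Va, Va, (EE R), (EE R), [set Va], [set [set oa]; [set ob]],
  [set [set oc]], set0.
have nVa : Va != set0 by apply/set0Pn; exists oa; rewrite !inE.
have nc : forall x : 'I_3, [set x] != set0 by move=> x; apply/set0Pn; exists x; rewrite inE.
split; first exact: hgraph.
split; first exact: hgraph.
split; first by rewrite /volume /V1 !sum3 /EE /=; lra.
split; first by rewrite /volume /Va !sum2 /EE /=; lra.
split.
  split.
  - by rewrite setIC (setIidPl _) // /Va /V1; apply/subsetP => i; rewrite !inE => /orP [] ->; rewrite ?orbT.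
  - by [].
  - move=> i j Hi; rewrite hV1a inE => /eqP ->; move: Hi; rewrite /Va !inE /EE.
    by case/orP => /eqP ->.
  - by move=> i j _; rewrite setDE /V1 /Va !inE; case: j => [[|[|[|k]]] Hk].
split; first exact: part1.
split.
  rewrite /clustering /Va; apply: partitionU1; first exact: part1.
    exact: nc.
  by rewrite -setI_eq0; apply/eqP/setP => x; rewrite !inE; case: eqP => // ->.
split; first by rewrite hV1a; exact: part1.
split; first by rewrite hV2a; exact: part0.
have hsVc : Va \notin [set [set oc]] by rewrite inE.
have hsab : [set oa] \notin [set [set ob]; [set oc]] by rewrite !inE negb_or sab sac.
have hsbc : [set ob] \notin [set [set oc]] by rewrite inE.
have hsab' : [set oa] \notin [set [set ob]] by rewrite inE.
rewrite /Qmod setU0 -setUA big_setU1 //= big_set1 big_setU1 //= big_setU1 //= big_set1.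
rewrite setU0 big_setU1 //= big_set1.
rewrite /within /volume /Va /V1 !big_set1 !sum2 !sum3 /EE /=.
have e16 : (2 + 1 + 0 + (1 + 2 + 0) + (0 + 0 + 10) : R) = 16 by lra.
have e6 : (2 + 1 + (1 + 2) : R) = 6 by lra.
rewrite e16 e6 !expr2; split; lra.
Qed.
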